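(* Let $n \in \mathbb{N}$, let $X=\{x_1,\dots,x_m\}$ and $Y=\{y_1,\dots,y_m\}$ be disjoint vertex sets with $m=|X| = |Y| \geqslant n^2 + n$, and let $I \in \{0,1\}^4$. Then $M^<_I(X,Y)$ and $M^>_I(X,Y)$ each have at least $2^{n-1}$ distinct induced ordered subgraphs of order $n$.
   Context: Ordered graphs are graphs with a linear order on the vertices; induced ordered subgraphs are those induced by vertex subsets with the inherited order, and two are distinct if they are not order-isomorphic. For $I=(I_1,I_2,I_3,I_4)\in\{0,1\}^4$ and $x_1<\dots<x_m<y_1<\dots<y_m$, the ordered graph $M^<_I(X,Y)$ on $X\cup Y$ has edges: $x_ix_j$ ($i\neq j$) is an edge iff $I_1=1$; for $i<j$, $x_iy_j$ is an edge iff $I_2=1$; for $i>j$, $x_iy_j$ is an edge iff $I_3=1$; $y_iy_j$ ($i\neq j$) is an edge iff $I_4=1$; $x_iy_i$ is an edge iff $i$ is odd. The ordered graph $M^>_I(X,Y)$ is defined identically except that the vertices of $Y$ are ordered $x_1<\dots<x_m<y_m<\dots<y_1$ (i.e. $y_1>\dots>y_m$). *)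

(* Defs.v *)
From mathcomp Require Import all_boot.
Set Implicit Arguments. Unset Strict Implicit. Unset Printing Implicit Defensive.

(* An ordered graph on N vertices: vertex set 'I_N with the natural order of
   'I_N, edge relation E (a symmetric irreflexive boolean relation on 'I_N). *)

(* Labels of the vertices of M_I(X,Y): (false, a) is x_{a+1}, (true, b) is y_{b+1},
   with 0-based indices a, b < m. *)
Definition M_lab (I : bool * bool * bool * bool) (u v : bool * nat) : bool :=
  let: (I1, I2, I3, I4) := I in
  match u, v with
  | (false, a), (false, b) => (a != b) && I1
  | (true, a), (true, b) => (a != b) && I4
  | (false, a), (true, b) | (true, b), (false, a) =>
      if a < b then I2 else if b < a then I3 else ~~ odd a (* a+1 odd *)
  end.

(* M^<: positions 0..m-1 are x_1<..<x_m, positions m..2m-1 are y_1<..<y_m. *)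
Definition lab_lt (m p : nat) : bool * nat :=
  if p < m then (false, p) else (true, p - m).
(* M^>: positions 0..m-1 are x_1<..<x_m, positions m..2m-1 are y_m<..<y_1. *)
Definition lab_gt (m p : nat) : bool * nat :=
  if p < m then (false, p) else (true, (m + m).-1 - p).

Definition M_lt (I : bool * bool * bool * bool) (m : nat) : rel 'I_(m + m) :=
  fun p q => M_lab I (lab_lt m p) (lab_lt m q).
Definition M_gt (I : bool * bool * bool * bool) (m : nat) : rel 'I_(m + m) :=
  fun p q => M_lab I (lab_gt m p) (lab_gt m q).

Definition ord_iso (N : nat) (E : rel 'I_N) (S T : {set 'I_N}) : Prop :=
  exists f : 'I_N -> 'I_N,
    [/\ f @: S = T,
        {in S &, forall u v : 'I_N, u < v -> f u < f v} &
        {in S &, forall u v : 'I_N, E (f u) (f v) = E u v}].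

Definition many_induced (N : nat) (E : rel 'I_N) (n k : nat) : Prop :=
  exists F : {set {set 'I_N}},
    [/\ k <= #|F|,
        {in F, forall S : {set 'I_N}, #|S| = n} &
        {in F &, forall S T : {set 'I_N}, S != T -> ~ ord_iso E S T}].
Arguments M_lt I m : clear implicits.
Arguments M_gt I m : clear implicits.

(* Main.v *)
Require Import Defs.
From mathcomp Require Import all_boot zify.
Set Implicit Arguments. Unset Strict Implicit. Unset Printing Implicit Defensive.

Lemma card_ord_set (N : nat) (s : seq nat) (P : pred nat) :
  uniq s -> all (fun x => x < N) s ->
  #|[set x : 'I_N | (val x \in s) && P (val x)]| = count P s.
Proof.
move=> us alls.
rewrite cardE -(size_map val) -size_filter.
apply: perm_size; apply: uniq_perm.
- rewrite map_inj_uniq ?enum_uniq //; exact: val_inj.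
- exact: filter_uniq.
move=> k; rewrite mem_filter; apply/mapP/andP.
- by case=> x; rewrite mem_enum inE => /andP[h1 h2] ->.
- case=> Pk ks.
  have kN : k < N by move/allP: alls => /(_ k ks).
  exists (Ordinal kN) => //; by rewrite mem_enum inE /= ks Pk.
Qed.

Lemma count_sub_lt (T : eqType) (a b : pred T) (s : seq T) (x : T) :
  (forall y, a y -> b y) -> x \in s -> b x -> ~~ a x -> count a s < count b s.
Proof.
move=> ab; elim: s => [//|y s IH]; rewrite inE => /orP[/eqP<-|xs] bx ax /=.
- rewrite bx (negbTE ax) add0n add1n ltnS.
  by apply: sub_count => z; apply: ab.
- have := IH xs bx ax; case ay: (a y); first by rewrite (ab _ ay).
  by case: (b y) => /= h; lia.
Qed.

Section Rank.
Variables (n : nat) (pos : nat -> nat).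
Definition rk i := count (fun j => pos j < pos i) (iota 0 n).
Hypothesis pos_inj : forall i j, i < n -> j < n -> pos i = pos j -> i = j.

Lemma rk_lt i j : i < n -> j < n -> pos i < pos j -> rk i < rk j.
Proof.
move=> i_n j_n lt; apply: (count_sub_lt (x := i)).
- by move=> y /= h; apply: ltn_trans lt.
- by rewrite mem_iota.
- by [].
- by rewrite ltnn.
Qed.

Lemma rk_inj i j : i < n -> j < n -> rk i = rk j -> i = j.
Proof.
move=> i_n j_n e; case: (ltngtP (pos i) (pos j)) => h.
- by have := rk_lt i_n j_n h; rewrite e ltnn.
- by have := rk_lt j_n i_n h; rewrite e ltnn.
- exact: pos_inj.
Qed.

Lemma rk_ltn i : i < n -> rk i < n.
Proof.
move=> i_n; rewrite -[X in _ < X](size_iota 0 n) -(count_predC (fun j => pos j < pos i)).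
rewrite -[X in X < _]addn0 ltn_add2l -has_count; apply/hasP; exists i.
  by rewrite mem_iota.
by rewrite /= ltnn.
Qed.

Lemma rk_surj r : r < n -> exists2 i, i < n & rk i = r.
Proof.
move=> r_n.
have U : uniq (map rk (iota 0 n)).
  rewrite map_inj_in_uniq ?iota_uniq // => i j; rewrite !mem_iota /= !add0n.
  exact: rk_inj.
have S : {subset map rk (iota 0 n) <= iota 0 n}.
  by move=> x /mapP[i]; rewrite !mem_iota /= !add0n => /rk_ltn h ->.
have [_ E] := uniq_min_size U S (eq_leq (esym (size_map rk (iota 0 n)))).
have : r \in map rk (iota 0 n) by rewrite E mem_iota.
by case/mapP => i; rewrite mem_iota => /= h ->; exists i.
Qed.
End Rank.

Lemma rank_pres (N : nat) (S T : {set 'I_N}) (f : 'I_N -> 'I_N) (u : 'I_N) :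
  f @: S = T -> {in S &, forall x y : 'I_N, x < y -> f x < f y} -> u \in S ->
  #|[set v in T | v < f u]| = #|[set v in S | v < u]|.
Proof.
move=> fS fm uS.
have finj : {in S &, injective f}.
  move=> x y xS yS e; apply: val_inj; case: (ltngtP x y) => // h.
  - by have := fm _ _ xS yS h; rewrite e ltnn.
  - by have := fm _ _ yS xS h; rewrite e ltnn.
have -> : [set v in T | v < f u] = f @: [set v in S | v < u].
  apply/setP => z; rewrite inE; apply/andP/imsetP.
  - case; rewrite -fS => /imsetP[x xS ->] lt; exists x => //.
    rewrite inE xS /=; case: (ltngtP x u) => // h.
    + by have := fm _ _ uS xS h; rewrite ltnNge (ltnW lt).
    + by move: lt; rewrite (val_inj h) ltnn.
  - case=> x; rewrite inE => /andP[xS lt] ->; split; last exact: fm.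
    by rewrite -fS; apply: imset_f.
apply: card_in_imset => x y; rewrite !inE => /andP[xS _] /andP[yS _]; exact: finj.
Qed.

Lemma gen_many (N : nat) (E : rel 'I_N) (Enat : nat -> nat -> bool) (n k : nat)
    (B : finType) (pos : B -> nat -> nat) :
  (forall x y : 'I_N, E x y = Enat x y) ->
  k <= #|B| ->
  (forall b i, i < n -> pos b i < N) ->
  (forall b i j, i < n -> j < n -> pos b i = pos b j -> i = j) ->
  (forall b b', b != b' -> exists i1 i2 j1 j2, [&& i1 < n, i2 < n, j1 < n & j2 < n] /\
     [/\ rk n (pos b) i1 = rk n (pos b') j1, rk n (pos b) i2 = rk n (pos b') j2 &
      Enat (pos b i1) (pos b i2) != Enat (pos b' j1) (pos b' j2)]) ->
  many_induced E n k.
Proof.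
move=> EE kB posN posI D.
pose s b := map (pos b) (iota 0 n).
pose S b := [set x : 'I_N | val x \in s b].
have us b : uniq (s b).
  rewrite map_inj_in_uniq ?iota_uniq // => i j; rewrite !mem_iota /= !add0n.
  exact: posI.
have als b : all (fun x => x < N) (s b).
  by apply/allP => x /mapP[i]; rewrite mem_iota => /= h ->; apply: posN.
have cardS b : #|S b| = n.
  rewrite -[n](size_iota 0) -(size_map (pos b)) -/(s b) -count_predT.
  rewrite -(card_ord_set predT (us b) (als b)); apply: eq_card => x; by rewrite !inE andbT.
have rankS b i (iN : i < n) :
   #|[set v in S b | v < Ordinal (posN b i iN)]| = rk n (pos b) i.
  rewrite /rk -(count_map (pos b) (fun z => z < pos b i)) -/(s b).
  rewrite -(card_ord_set _ (us b) (als b)); apply: eq_card => x; by rewrite !inE.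
have SbI b i (iN : i < n) : Ordinal (posN b i iN) \in S b.
  by rewrite inE /=; apply: map_f; rewrite mem_iota.
have noniso b b' : b != b' -> ~ ord_iso E (S b) (S b').
  move=> nb [f [fS fm fE]].
  have key i j (iN : i < n) (jN : j < n) : rk n (pos b) i = rk n (pos b') j ->
      f (Ordinal (posN b i iN)) = Ordinal (posN b' j jN).
    move=> er.
    have fuT : f (Ordinal (posN b i iN)) \in S b' by rewrite -fS; apply: imset_f.
    have := fuT; rewrite inE => /mapP[j' ]; rewrite mem_iota /= add0n => j'N ej'.
    have := rank_pres fS fm (SbI b i iN); rewrite rankS.
    have -> : f (Ordinal (posN b i iN)) = Ordinal (posN b' j' j'N) by apply: val_inj.
    rewrite rankS => er'; rewrite er in er'.
    have ejj := rk_inj (posI b') j'N jN er'.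
    by apply: val_inj => /=; rewrite ejj.
  have [i1 [i2 [j1 [j2 [/and4P[i1N i2N j1N j2N] [r1 r2 ne]]]]]] := D b b' nb.
  have := fE _ _ (SbI b i1 i1N) (SbI b i2 i2N).
  rewrite (key _ _ i1N j1N r1) (key _ _ i2N j2N r2) !EE /= => e.
  by move: ne; rewrite e eqxx.
have Sinj : injective S.
  move=> b b' e; apply/eqP; apply/negPn/negP => nb; apply: (noniso b b' nb).
  rewrite -e; exists (fun x => x); split => //; exact: imset_id.
exists [set S b | b in B]; split.
- by rewrite card_imset.
- by move=> X /imsetP[b _ ->].
- move=> X Y /imsetP[b _ ->] /imsetP[b' _ ->] ne; apply: noniso.
  by apply: contraNneq ne => ->.
Qed.

Section Spec.
Variables (m n : nat) (I1 I2 I3 I4 o : bool).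
Hypothesis mn : n.*2 <= m.

Definition xv k := k.*2 + I3.
Definition yv (w : nat -> bool) k :=
  if (0 < k) && ~~ w k.-1 then k.-1.*2 + I3 else k.*2 + ~~ I3.
Definition labv (w : nat -> bool) k := if w k then (true, yv w k) else (false, xv k).
Definition posv (w : nat -> bool) k :=
  if w k then (if o then (m + m).-1 - yv w k else m + yv w k) else xv k.
Definition labo p := if o then lab_gt m p else lab_lt m p.
Definition II := (I1, I2, I3, I4).

Lemma yv_bnd (w : nat -> bool) k : k.-1.*2 <= yv w k <= k.*2 + 1.
Proof. rewrite /yv; case: ifP => _; case: I3 => /=; lia. Qed.

Lemma yv_mono (w : nat -> bool) k k' : k < k' -> w k -> w k' -> yv w k < yv w k'.
Proof.
move=> lt wk wk'; have := yv_bnd w k; rewrite /yv.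
case: (boolP (k' == k.+1)) => [/eqP ->|ne] /=.
  rewrite /= wk /=; case: ifP => _; case: I3 => /=; lia.
by case: ifP => _; case: ifP => _; case: I3 => /=; lia.
Qed.

Lemma yv_inj (w : nat -> bool) k k' : w k -> w k' -> yv w k = yv w k' -> k = k'.
Proof.
move=> wk wk' e; case: (ltngtP k k') => // h.
- by have := yv_mono h wk wk'; rewrite e ltnn.
- by have := yv_mono h wk' wk; rewrite e ltnn.
Qed.

Lemma lab_posv (w : nat -> bool) k : k < n -> labo (posv w k) = labv w k.
Proof.
move=> kn; have := yv_bnd w k; rewrite /labo /posv /labv /lab_gt /lab_lt /xv.
case: (w k) => hb.
- case: o.
  + rewrite ifF; last by lia.
    congr (_, _); lia.
  + rewrite ifF; last by lia.
    congr (_, _); lia.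
- by case: o; rewrite ifT //; case: I3 => /=; lia.
Qed.

Lemma posv_lt (w : nat -> bool) k : k < n -> posv w k < m + m.
Proof.
move=> kn; have := yv_bnd w k; rewrite /posv /xv.
case: (w k); last by case: I3 => /=; lia.
by case: o; lia.
Qed.

Lemma posv_inj (w : nat -> bool) k k' : k < n -> k' < n -> posv w k = posv w k' -> k = k'.
Proof.
move=> kn k'n e.
have : labo (posv w k) = labo (posv w k') by rewrite e.
rewrite !lab_posv // /labv.
case wk: (w k); case wk': (w k') => //.
- by case=> /(yv_inj wk wk').
- rewrite /xv; case=> h; lia.
Qed.

Lemma Enat_posv (w : nat -> bool) k1 k2 : k1 < n -> k2 < n ->
  M_lab II (labo (posv w k1)) (labo (posv w k2)) = M_lab II (labv w k1) (labv w k2).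
Proof. by move=> h1 h2; rewrite !lab_posv. Qed.


Definition cX (w : nat -> bool) k := count (fun j => ~~ w j) (iota 0 k).
Definition cY (w : nat -> bool) k := count (fun j => w j) (iota 0 k).
Definition hh w := cX w n.
Definition rkf (w : nat -> bool) k :=
  if w k then hh w + (if o then cY w n - (cY w k).+1 else cY w k) else cX w k.

Lemma cnt_iotaS (P : pred nat) k : count P (iota 0 k.+1) = count P (iota 0 k) + P k.
Proof. by rewrite -addn1 iotaD count_cat /= addn0 add0n. Qed.

Lemma cXS w k : cX w k.+1 = cX w k + ~~ w k.
Proof. exact: cnt_iotaS. Qed.
Lemma cYS w k : cY w k.+1 = cY w k + w k.
Proof. exact: cnt_iotaS. Qed.

Lemma cXY w k : cX w k + cY w k = k.
Proof.
elim: k => [//|k IH]; rewrite cXS cYS; case: (w k) => /=; lia.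
Qed.

Lemma cnt_mono (P : pred nat) a b : a <= b -> count P (iota 0 a) <= count P (iota 0 b).
Proof.
move=> ab; rewrite -(subnKC ab) iotaD count_cat; exact: leq_addr.
Qed.

Lemma cX_mono w a b : a <= b -> cX w a <= cX w b.
Proof. exact: cnt_mono. Qed.
Lemma cY_mono w a b : a <= b -> cY w a <= cY w b.
Proof. exact: cnt_mono. Qed.

Lemma cnt_lt (P : pred nat) k N : k <= N ->
  count (fun j => P j && (j < k)) (iota 0 N) = count P (iota 0 k).
Proof.
move=> kN; rewrite -(subnKC kN) iotaD count_cat.
rewrite (@eq_in_count _ _ P (iota 0 k)); last first.
  by move=> j; rewrite mem_iota /= add0n => ->; rewrite andbT.
rewrite (@eq_in_count _ _ pred0 (iota (0 + k) _)); last first.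
  move=> j; rewrite mem_iota /= add0n => /andP[h _]; by rewrite ltnNge h andbF.
by rewrite count_pred0 addn0.
Qed.

Lemma cnt_split (P Q : pred nat) s :
  count (fun j => P j && Q j) s + count (fun j => P j && ~~ Q j) s = count P s.
Proof. elim: s => [//|x s IH] /=; case: (P x); case: (Q x) => /=; lia. Qed.

Lemma cnt_if (w : nat -> bool) (A B : pred nat) s :
  count (fun j => if w j then A j else B j) s =
  count (fun j => w j && A j) s + count (fun j => ~~ w j && B j) s.
Proof. elim: s => [//|x s IH] /=; case: (w x) => /=; lia. Qed.

Lemma rk_posv w k : k < n -> rk n (posv w) k = rkf w k.
Proof.
move=> kn; rewrite /rk.
have := yv_bnd w k.
rewrite (@eq_in_count _ _ (fun j => if w j then
    (if w k then (if o then k < j else j < k) else false) else (if w k then true else j < k))); last first.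
  move=> j; rewrite mem_iota /= add0n => jn.
  have bj := yv_bnd w j; have bk := yv_bnd w k.
  rewrite /posv /xv; case wj: (w j); case wk: (w k) => //.
  - have [lt|lt|e] := ltngtP j k.
    + have := yv_mono lt wj wk; case: o => /=; lia.
    + have := yv_mono lt wk wj; case: o => /=; lia.
    + by rewrite e; case: o; rewrite ltnn.
  - by case: o; case: I3 => /=; lia.
  - by case: o; case: I3 => /=; lia.
  - case: I3 => /=; lia.
move=> _; rewrite cnt_if /rkf.
case wk: (w k).
- rewrite (@eq_count _ (fun j => ~~ w j && true) (fun j => ~~ w j)); last by move=> j; rewrite andbT.
  rewrite addnC; congr (_ + _); case: o.
  + have := cnt_split (fun j => w j) (fun j => j < k.+1) (iota 0 n).
    rewrite cnt_lt // -/(cY w k.+1) -/(cY w n) cYS wk.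
    have -> : count (fun j => w j && ~~ (j < k.+1)) (iota 0 n) =
              count (fun j => w j && (k < j)) (iota 0 n).
      by apply: eq_count => j; rewrite ltnNge negbK.
    lia.
  + exact: cnt_lt (ltnW kn).
- rewrite (@eq_count _ (fun j => w j && false) pred0); last by move=> j; rewrite andbF.
  rewrite count_pred0 add0n; exact: cnt_lt (ltnW kn).
Qed.


Lemma Mlab_XY a c : M_lab II (false, a) (true, c) =
  if a < c then I2 else if c < a then I3 else ~~ odd a.
Proof. by []. Qed.
Lemma Mlab_XX a b : M_lab II (false, a) (false, b) = (a != b) && I1.
Proof. by []. Qed.
Lemma Mlab_YY a b : M_lab II (true, a) (true, b) = (a != b) && I4.
Proof. by []. Qed.

Definition D (w w' : nat -> bool) := exists k1 k2 l1 l2,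
  [&& k1 < n, k2 < n, l1 < n & l2 < n] /\
  [/\ rkf w k1 = rkf w' l1, rkf w k2 = rkf w' l2 &
      M_lab II (labv w k1) (labv w k2) != M_lab II (labv w' l1) (labv w' l2)].

Lemma D_sym w w' : D w w' -> D w' w.
Proof.
case=> k1 [k2 [l1 [l2 [/and4P[h1 h2 h3 h4] [r1 r2 ne]]]]].
exists l1, l2, k1, k2; split; first by apply/and4P.
by split => //; rewrite eq_sym.
Qed.

Lemma hh_le w : hh w <= n.
Proof. by rewrite /hh /cX -[X in _ <= X](size_iota 0 n) count_size. Qed.

Lemma cYn w : cY w n = n - hh w.
Proof. have := cXY w n; rewrite /hh; lia. Qed.

Lemma rkf_X (w : nat -> bool) k : k < n -> ~~ w k -> rkf w k = cX w k /\ cX w k < hh w.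
Proof.
move=> kn wk; rewrite /rkf (negbTE wk); split => //.
have := cX_mono w kn; rewrite cXS wk /hh; lia.
Qed.

Lemma rkf_Y (w : nat -> bool) k : w k -> hh w <= rkf w k.
Proof. by move=> wk; rewrite /rkf wk leq_addr. Qed.

Lemma rkf_lt_hh (w : nat -> bool) k : k < n -> rkf w k < hh w -> ~~ w k.
Proof. move=> kn; apply: contraTN => wk; rewrite -leqNgt; exact: rkf_Y. Qed.

Lemma rkf_ge_hh (w : nat -> bool) k : k < n -> hh w <= rkf w k -> w k.
Proof.
move=> kn h; apply/negPn/negP => wk; have [e lt] := rkf_X kn wk; lia.
Qed.

Lemma rkf_surj w r : r < n -> exists2 k, k < n & rkf w k = r.
Proof.
move=> rn; have [k kn e] := rk_surj (@posv_inj w) rn.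
by exists k => //; rewrite -rk_posv.
Qed.

Lemma rkf_ltn w k : k < n -> rkf w k < n.
Proof. move=> kn; rewrite -rk_posv //; exact: rk_ltn. Qed.

Lemma xv_inj k k' : xv k = xv k' -> k = k'.
Proof. rewrite /xv; lia. Qed.

Lemma cnt_gap (P : pred nat) a b : a <= b -> (forall j, a <= j < b -> ~~ P j) ->
  count P (iota 0 b) = count P (iota 0 a).
Proof.
move=> ab H; rewrite -(subnKC ab) iotaD count_cat.
rewrite (@eq_in_count _ _ pred0 (iota (0 + a) _)) ?count_pred0 ?addn0 //.
move=> j; rewrite mem_iota /= add0n => h; apply/negbTE/H; lia.
Qed.

Lemma oddX k : odd (k.*2 + I3) = I3.
Proof. by rewrite oddD odd_double /=; case: I3. Qed.

Lemma yv_tie (w : nat -> bool) k : 0 < k -> ~~ w k.-1 -> yv w k = xv k.-1.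
Proof. by move=> k0 wk; rewrite /yv k0 wk. Qed.

Lemma core_X (w w' : nat -> bool) k : k < n -> (forall j, j < k -> w j = w' j) ->
  w k = false -> w' k = true -> hh w = hh w' -> D w w'.
Proof.
move=> kn pre wk w'k eh.
have pX : cX w k = cX w' k.
  by apply: eq_in_count => j; rewrite mem_iota /= add0n => /pre ->.
have pY : cY w k = cY w' k.
  by apply: eq_in_count => j; rewrite mem_iota /= add0n => /pre ->.
have tY : cY w n = cY w' n by rewrite !cYn eh.
have [j0 [kj0 j0n wj0]] : exists j, [/\ k <= j, j < n & w j].
  case: (boolP [exists j : 'I_n, (k <= j) && w j]) => [/existsP[j /andP[kj wj]]|/existsPn H].
    by exists j.
  exfalso.
  have e : cY w n = cY w k.
    apply: cnt_gap; first exact: ltnW.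
    move=> j /andP[kj jn]; have := H (Ordinal jn); by rewrite /= kj.
  have := cY_mono w' kn; rewrite cYS w'k; lia.
have exQ : exists j, (k <= j) && (j < n) && w j by exists j0; rewrite kj0 j0n wj0.
case: (ex_minnP exQ) => k2 /andP[/andP[kk2 k2n] wk2] k2min.
have kk2' : k < k2.
  rewrite leq_eqVlt in kk2; case/orP: kk2 => [/eqP e|//].
  by rewrite -e wk in wk2.
have gap : forall j, k <= j < k2 -> ~~ w j.
  move=> j /andP[kj jk2]; apply/negP => wj.
  have := k2min j; rewrite kj wj (ltn_trans jk2 k2n) /= => /(_ isT); lia.
have cYk2 : cY w k2 = cY w k by apply: cnt_gap => //; exact: ltnW.
have k1n : k2.-1 < n by lia.
have wk1 : ~~ w k2.-1 by apply: gap; lia.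
have [rk1 rlt] := rkf_X k1n wk1.
have [l1 l1n rl1] := rkf_surj w' (leq_trans rlt (hh_le w)).
have wl1 : ~~ w' l1 by apply: rkf_lt_hh => //; rewrite rl1 -eh.
have [rl1' _] := rkf_X l1n wl1.
have kl1 : k < l1.
  rewrite ltnNge; apply/negP => l1k.
  have := cX_mono w' (l1k : l1.+1 <= k.+1); rewrite cXS cXS wl1 w'k.
  have kk1 : k <= k2.-1 by lia.
  have := cX_mono w kk1; lia.
exists k2.-1, k2, l1, k; split; first by rewrite k1n k2n l1n kn.
split.
- by rewrite rk1 rl1.
- by rewrite /rkf wk2 w'k cYk2 pY tY eh.
- rewrite /labv wk2 w'k (negbTE wk1) (negbTE wl1) !Mlab_XY.
  rewrite (yv_tie (_ : 0 < k2) wk1); last by lia.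
  rewrite ltnn /=.
  have hb := yv_bnd w' k.
  have h1 : (xv l1 < yv w' k) = false by rewrite /xv; case: I3 => /=; lia.
  have h2 : (yv w' k < xv l1) by rewrite /xv; case: I3 => /=; lia.
  by rewrite h1 h2 /xv oddX; case: I3.
Qed.


Lemma sameh (w w' : nat -> bool) k0 : k0 < n -> w k0 != w' k0 -> hh w = hh w' -> D w w'.
Proof.
move=> k0n ne eh.
have exQ : exists k, (k < n) && (w k != w' k) by exists k0; rewrite k0n ne.
case: (ex_minnP exQ) => k /andP[kn nek] kmin.
have pre : forall j, j < k -> w j = w' j.
  move=> j jk; apply/eqP/negPn/negP => nj.
  have := kmin j; rewrite nj (ltn_trans jk kn) => /(_ isT); lia.
case wk: (w k); move: nek; rewrite wk.
- case w'k: (w' k) => // _; apply: D_sym.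
  by apply: (core_X kn _ w'k wk (esym eh)) => j jk; rewrite pre.
- case w'k: (w' k) => // _; exact: (core_X kn pre wk w'k eh).
Qed.

Lemma F1 (w w' : nat -> bool) : w n.-1 = false -> w' n.-1 = false -> I1 != I3 ->
  hh w < hh w' -> D w w'.
Proof.
move=> wn w'n ne lt.
have hn := hh_le w'.
have n1n : n.-1 < n by lia.
have [e1 lt1] := rkf_X n1n (negbT wn).
have hS : hh w = cX w n.-1 + 1.
  have n0 : 0 < n by lia.
  by rewrite /hh -[X in cX w X](prednK n0) cXS wn.
have [k2 k2n rk2] : exists2 k, k < n & rkf w k = hh w by apply: rkf_surj; lia.
have wk2 : w k2 by apply: rkf_ge_hh => //; rewrite rk2.
have k2n1 : k2 < n.-1.
  rewrite ltn_neqAle -ltnS (prednK (_ : 0 < n)) ?k2n ?andbT; last by lia.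
  by apply: contraTneq wk2 => ->; rewrite wn.
have [l1 l1n rl1] : exists2 k, k < n & rkf w' k = hh w - 1 by apply: rkf_surj; lia.
have [l2 l2n rl2] : exists2 k, k < n & rkf w' k = hh w by apply: rkf_surj; lia.
have wl1 : ~~ w' l1 by apply: rkf_lt_hh => //; rewrite rl1; lia.
have wl2 : ~~ w' l2 by apply: rkf_lt_hh => //; rewrite rl2; lia.
have l12 : l1 != l2 by apply/eqP => e0; move: rl1; rewrite e0 rl2; lia.
exists n.-1, k2, l1, l2; split; first by rewrite n1n k2n l1n l2n.
split.
- by rewrite e1 rl1; lia.
- by rewrite rk2 rl2.
- rewrite /labv wn wk2 (negbTE wl1) (negbTE wl2) Mlab_XY Mlab_XX.
  have hb := yv_bnd w k2.
  have h1 : (xv n.-1 < yv w k2) = false by rewrite /xv; case: I3 => /=; lia.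
  have h2 : (yv w k2 < xv n.-1) by rewrite /xv; case: I3 => /=; lia.
  rewrite h1 h2 /=.
  have -> : (xv l1 != xv l2) by apply: contra l12 => /eqP /xv_inj ->.
  by rewrite eq_sym.
Qed.

Lemma F2 (w w' : nat -> bool) : w n.-1 = true -> w' n.-1 = true -> I4 = I3 ->
  hh w < hh w' -> D w w'.
Proof.
move=> wn w'n e lt.
have hn := hh_le w'.
have [l1 l1n rl1] : exists2 k, k < n & rkf w' k = hh w' - 1 by apply: rkf_surj; lia.
have wl1 : ~~ w' l1 by apply: rkf_lt_hh => //; rewrite rl1; lia.
have [e1 _] := rkf_X l1n wl1.
have l1n1 : l1.+1 < n.
  have : l1 != n.-1 by apply: contraTneq wl1 => ->; rewrite w'n.
  lia.
have wl2 : w' l1.+1.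
  apply/negPn/negP => h; have [_ lt2] := rkf_X l1n1 h.
  move: lt2; rewrite cXS wl1; lia.
have [k1 k1n rk1] : exists2 k, k < n & rkf w k = hh w' - 1 by apply: rkf_surj; lia.
have [k2 k2n rk2] := rkf_surj w (rkf_ltn w' l1n1).
have wk1 : w k1 by apply: rkf_ge_hh => //; rewrite rk1; lia.
have r2 := rkf_Y wl2.
have wk2 : w k2 by apply: rkf_ge_hh => //; rewrite rk2; lia.
have k12 : k1 != k2 by apply/eqP => e0; move: rk1; rewrite e0 rk2; lia.
exists k1, k2, l1, l1.+1; split; first by rewrite k1n k2n l1n l1n1.
split.
- by rewrite rk1 rl1.
- by rewrite rk2.
- rewrite /labv wk1 wk2 (negbTE wl1) wl2 Mlab_YY Mlab_XY.
  rewrite (yv_tie (_ : 0 < l1.+1) wl1) // ltnn /=.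
  have -> : (yv w k1 != yv w k2) by apply: contra k12 => /eqP /(yv_inj wk1 wk2) ->.
  by rewrite /= e /xv oddX; case: I3.
Qed.

Lemma F3 (w w' : nat -> bool) : o = true -> w 0 = true -> w' 0 = true -> I3 != I4 ->
  hh w < hh w' -> D w w'.
Proof.
move=> ho w0 w'0 ne lt.
have hn := hh_le w'.
have n1 : 1 <= n by lia.
have cw : 1 <= cY w n by have := cY_mono w n1; rewrite cYS w0.
have cw' : 1 <= cY w' n by have := cY_mono w' n1; rewrite cYS w'0.
have r0 : rkf w 0 = n.-1 by rewrite /rkf w0 ho; move: cw; rewrite cYn /cY /=; lia.
have r0' : rkf w' 0 = n.-1 by rewrite /rkf w'0 ho; move: cw'; rewrite cYn /cY /=; lia.
have h'n : hh w' <= n.-1 by move: cw'; rewrite cYn; lia.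
have [k1 k1n rk1] : exists2 k, k < n & rkf w k = hh w by apply: rkf_surj; lia.
have wk1 : w k1 by apply: rkf_ge_hh => //; rewrite rk1.
have k10 : k1 != 0 by apply/eqP => e0; move: rk1; rewrite e0 r0; lia.
have [l1 l1n rl1] : exists2 k, k < n & rkf w' k = hh w by apply: rkf_surj; lia.
have wl1 : ~~ w' l1 by apply: rkf_lt_hh => //; rewrite rl1.
have l10 : 0 < l1 by rewrite lt0n; apply: contra wl1 => /eqP ->; rewrite w'0.
exists k1, 0, l1, 0; split; first by rewrite k1n l1n n1.
split.
- by rewrite rk1 rl1.
- by rewrite r0 r0'.
- rewrite /labv wk1 w0 (negbTE wl1) w'0 Mlab_YY Mlab_XY.
  have -> : (yv w k1 != yv w 0) by apply: contra k10 => /eqP /(yv_inj wk1 w0) ->.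
  have e0 : yv w' 0 = ~~ I3 by rewrite /yv.
  have h1 : (xv l1 < yv w' 0) = false by rewrite e0 /xv; case: I3 => /=; lia.
  have h2 : (yv w' 0 < xv l1) by rewrite e0 /xv; case: I3 => /=; lia.
  by rewrite h1 h2 /= eq_sym.
Qed.

Lemma F4 (w w' : nat -> bool) : o = false -> w 0 = false -> w' 0 = false -> I1 = I3 ->
  hh w < hh w' -> D w w'.
Proof.
move=> ho w0 w'0 e lt.
have hn := hh_le w'.
have [k2 k2n rk2] : exists2 k, k < n & rkf w k = hh w by apply: rkf_surj; lia.
have wk2 : w k2 by apply: rkf_ge_hh => //; rewrite rk2.
have cY0 : cY w k2 = 0 by move: rk2; rewrite /rkf wk2 ho; lia.
have k20 : 0 < k2 by rewrite lt0n; apply/eqP => e0; move: wk2; rewrite e0 w0.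
have k1n : k2.-1 < n by lia.
have wk1 : ~~ w k2.-1.
  apply/negP => h; have := cYS w k2.-1; rewrite (prednK k20) cY0 h; lia.
have cY1 : cY w k2.-1 = 0 by have := cY_mono w (leq_pred k2); rewrite cY0; lia.
have [rk1 rlt] := rkf_X k1n wk1.
have cX1 : cX w k2.-1 = k2.-1 by have := cXY w k2.-1; rewrite cY1; lia.
have [l1 l1n rl1] : exists2 k, k < n & rkf w' k = k2.-1 by apply: rkf_surj; lia.
have [l2 l2n rl2] : exists2 k, k < n & rkf w' k = hh w by apply: rkf_surj; lia.
have wl1 : ~~ w' l1 by apply: rkf_lt_hh => //; rewrite rl1; lia.
have wl2 : ~~ w' l2 by apply: rkf_lt_hh => //; rewrite rl2; lia.
have l12 : l1 != l2 by apply/eqP => e0; move: rl1; rewrite e0 rl2; lia.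
exists k2.-1, k2, l1, l2; split; first by rewrite k1n k2n l1n l2n.
split.
- by rewrite rk1 rl1 cX1.
- by rewrite rk2 rl2.
- rewrite /labv wk2 (negbTE wk1) (negbTE wl1) (negbTE wl2) Mlab_XY Mlab_XX.
  rewrite (yv_tie k20 wk1) ltnn /=.
  have -> : (xv l1 != xv l2) by apply: contra l12 => /eqP /xv_inj ->.
  by rewrite /xv oddX e; case: I3.
Qed.


Definition lastm := (I1 != I3) || (I4 == I3).
Definition cm := if I1 != I3 then false else if I4 == I3 then true else o.
Definition good (w : nat -> bool) := if lastm then w n.-1 = cm else w 0 = cm.

Lemma diffh w w' : good w -> good w' -> hh w < hh w' -> D w w'.
Proof.
rewrite /good /lastm /cm.
case: (boolP (I1 != I3)) => h13 /=; first by move=> a b; apply: F1.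
case: (boolP (I4 == I3)) => h43 /=; first by move=> a b; apply: F2 => //; apply/eqP.
case ho: o => w0 w'0.
- by apply: F3 => //; rewrite eq_sym.
- by apply: F4 => //; apply/eqP; rewrite negbK in h13.
Qed.

Definition word (b : (n.-1).-tuple bool) k :=
  if lastm then (if k < n.-1 then nth false b k else cm)
  else (if k == 0 then cm else nth false b k.-1).

Lemma word_good b : good (word b).
Proof. by rewrite /good /word; case: lastm; rewrite ?ltnn ?eqxx. Qed.

Lemma word_diff b b' : b != b' -> exists2 k, k < n & word b k != word b' k.
Proof.
move=> ne.
case: (boolP [exists i : 'I_(n.-1), nth false b i != nth false b' i]); last first.
  move/existsPn => H; case/eqP: ne; apply: val_inj => /=.
  apply: (eq_from_nth (x0 := false)); first by rewrite !size_tuple.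
  move=> i; rewrite size_tuple => iN; by have := H (Ordinal iN); rewrite negbK => /eqP.
case/existsP => i hi.
have iN := ltn_ord i.
rewrite /word; case: lastm.
- by exists i; [lia | rewrite iN].
- by exists i.+1; [lia | rewrite /=].
Qed.

Lemma main_o : 0 < n ->
  many_induced (if o then M_gt II m else M_lt II m) n (2 ^ n.-1).
Proof.
move=> n0.
apply: (@gen_many _ _ (fun p q => M_lab II (labo p) (labo q)) n _ _
          (fun b : (n.-1).-tuple bool => posv (word b))).
- by rewrite /labo; case: o.
- by rewrite card_tuple card_bool.
- by move=> b i; apply: posv_lt.
- by move=> b i j; apply: posv_inj.
move=> b b' ne.
have [k0 k0n nk] := word_diff ne.
have HD : D (word b) (word b').
  case: (ltngtP (hh (word b)) (hh (word b'))) => h.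
  - exact: diffh (word_good b) (word_good b') h.
  - by apply: D_sym; apply: diffh (word_good b') (word_good b) h.
  - exact: sameh k0n nk h.
case: HD => k1 [k2 [l1 [l2 [/and4P[h1 h2 h3 h4] [r1 r2 ne']]]]].
exists k1, k2, l1, l2; split; first by apply/and4P.
by rewrite !rk_posv // !Enat_posv.
Qed.

End Spec.

Theorem lemma4 (n m : nat) (I : bool * bool * bool * bool) :
  n ^ 2 + n <= m ->
  many_induced (M_lt I m) n (2 ^ n.-1) /\ many_induced (M_gt I m) n (2 ^ n.-1).
Proof.
move=> hm.
case: (posnP n) => [->|n0].
  have H : forall E : rel 'I_(m + m), many_induced E 0 (2 ^ 0.-1).
    move=> E; exists [set set0]; split.
    - by rewrite cards1.
    - by move=> S; rewrite inE => /eqP ->; rewrite cards0.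
    - by move=> S T; rewrite !inE => /eqP -> /eqP ->; rewrite eqxx.
  by split; apply: H.
have mn : n.*2 <= m by nia.
case: I => [[[I1 I2] I3] I4].
split.
- exact: (main_o I1 I2 I3 I4 false mn n0).
- exact: (main_o I1 I2 I3 I4 true mn n0).
Qed.
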